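(* Let $n\geq 4$ and let $T_n$ be the group with generators $z,t_1,\dots,t_{n-1}$ and relations $t_i^2=1$ ($1\le i\le n-1$), $(t_jt_{j+1})^3=1$ ($1\le j\le n-2$), $(t_kt_l)^2=z$ (for $k\le l-2$), $z^2=1$ and $zt_i=t_iz$ ($1\le i\le n-1$). Let $i,j\in\{1,\dots,n\}$ with $i\neq j$ and let $k\in\{1,\dots,n-1\}$. Then \[ s_k\triangleright [i\;j]=[s_k(i)\;s_k(j)]\,z . \]
   Context: $\mathbb{S}_n$ is the symmetric group, $s_k=(k\;k+1)$ denotes the adjacent transposition, and $p:T_n\to\mathbb{S}_n$ is the surjective homomorphism with $p(t_k)=s_k$, $p(z)=1$; its kernel is $\langle z\rangle$, which is central of order $2$. For $\sigma\in\mathbb{S}_n$ and $t\in T_n$, define $\sigma\triangleright t=\bar\sigma t\bar\sigma^{-1}$, where $\bar\sigma\in T_n$ is any element with $p(\bar\sigma)=\sigma$ (this is independent of the choice since $z$ is central). For $1\le i,j\le n$, $i\ne j$, the elements $[i\;j]\in T_n$ are defined inductively by $[i\;i+1]=t_i$; $[i\;j]=(s_i\triangleright[i+1\;j])\,z$ for $i+1<j$; and $[j\;i]=[i\;j]\,z$ for $i<j$. *)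

(* Defs.v *)
From mathcomp Require Import all_boot.
Set Implicit Arguments. Unset Strict Implicit. Unset Printing Implicit Defensive.

(* Since every generator is an involution (x^2 = 1 is a relation), the group
   is the monoid presented by the same generators and relations: words over
   the generators modulo the congruence generated by the relations. *)

Inductive gen : Type := Z | T of nat.

Definition word := seq gen.

Inductive Tn_rel (n : nat) : word -> word -> Prop :=
| rel_tt i : 1 <= i -> i <= n - 1 -> Tn_rel n [:: T i; T i] [::]
| rel_braid j : 1 <= j -> j <= n - 2 ->
    Tn_rel n [:: T j; T j.+1; T j; T j.+1; T j; T j.+1] [::]
| rel_far k l : 1 <= k -> k <= l - 2 -> l <= n - 1 ->
    Tn_rel n [:: T k; T l; T k; T l] [:: Z]
| rel_zz : Tn_rel n [:: Z; Z] [::]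
| rel_zt i : 1 <= i -> i <= n - 1 -> Tn_rel n [:: Z; T i] [:: T i; Z].

Inductive Tn_eq (n : nat) : word -> word -> Prop :=
| Tn_refl u : Tn_eq n u u
| Tn_sym u v : Tn_eq n u v -> Tn_eq n v u
| Tn_trans u v w : Tn_eq n u v -> Tn_eq n v w -> Tn_eq n u w
| Tn_step a b u v : Tn_rel n u v -> Tn_eq n (a ++ u ++ b) (a ++ v ++ b).

(* Inverse of a word in T_n: all generators are involutions. *)
Definition winv (u : word) : word := rev u.

(* sigma |> t = lift(sigma) * t * lift(sigma)^-1.  For sigma = s_k we use the
   lift t_k (p(t_k) = s_k); the result is independent of the lift. *)
Definition act_s (k : nat) (t : word) : word := [:: T k] ++ t ++ winv [:: T k].

Definition s_ (k i : nat) : nat :=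
  if i == k then k.+1 else if i == k.+1 then k else i.

(* brup i d = [i  i+d+1]  (for i < j = i+d+1), via
   [i i+1] = t_i,  [i j] = (s_i |> [i+1 j]) z. *)
Fixpoint brup (i d : nat) : word :=
  match d with
  | 0 => [:: T i]
  | d'.+1 => act_s i (brup i.+1 d') ++ [:: Z]
  end.

(* [i j] for i <> j; [j i] = [i j] z for i < j. *)
Definition br (i j : nat) : word :=
  if i < j then brup i (j - i - 1) else brup j (i - j - 1) ++ [:: Z].

(* Main.v *)
Require Import Defs.
From mathcomp Require Import all_boot.
From mathcomp Require Import zify.
From Stdlib Require Import Setoid Morphisms.

Section S.
Variable n : nat.
Local Notation "u ~ v" := (Tn_eq n u v) (at level 70).

Lemma ctx a b u v : u ~ v -> a ++ u ++ b ~ a ++ v ++ b.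
Proof.
elim=> {u v} [u|u v _ IH|u v w _ IH1 _ IH2|a0 b0 u v H].
- by constructor.
- by apply: Tn_sym.
- by apply: Tn_trans IH2.
- have := Tn_step (a ++ a0) (b0 ++ b) H. by rewrite !catA -!(catA _ _ b0) -!catA.
Qed.

Global Instance Tn_equiv : Equivalence (Tn_eq n).
Proof. split; [exact: Tn_refl|exact: Tn_sym|exact: Tn_trans]. Qed.

Global Instance cat_proper : Proper (Tn_eq n ==> Tn_eq n ==> Tn_eq n) (@cat gen).
Proof.
move=> u u' Hu v v' Hv. apply: (Tn_trans (v := u' ++ v)).
- have := ctx [::] v _ _ Hu. by rewrite /= .
- have := ctx u' [::] _ _ Hv. by rewrite !cats0.
Qed.

Global Instance cons_proper : Proper (eq ==> Tn_eq n ==> Tn_eq n) (@cons gen).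
Proof. move=> x y -> u v H. change ([:: y] ++ u ~ [:: y] ++ v). apply: cat_proper => //. reflexivity. Qed.

Lemma rel_b u v b : Tn_rel n u v -> u ++ b ~ v ++ b.
Proof. move=> H. exact: (Tn_step [::] b H). Qed.

Lemma tt i b : 1 <= i -> i <= n - 1 -> T i :: T i :: b ~ b.
Proof. move=> h1 h2. exact: rel_b (rel_tt h1 h2). Qed.

Lemma zz b : Z :: Z :: b ~ b.
Proof. exact: rel_b (rel_zz n). Qed.

Lemma zt i b : 1 <= i -> i <= n - 1 -> Z :: T i :: b ~ T i :: Z :: b.
Proof. move=> h1 h2. exact: rel_b (rel_zt h1 h2). Qed.

Lemma farrel0 k l b : 1 <= k -> k + 2 <= l -> l <= n - 1 ->
  T k :: T l :: T k :: T l :: b ~ Z :: b.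
Proof. move=> h1 h2 h3. have {}h2 : k <= l - 2 by lia. exact: (rel_b [:: T k; T l; T k; T l] [:: Z] b (rel_far h1 h2 h3)). Qed.

Lemma farrel k l b : 1 <= k -> k <= n - 1 -> 1 <= l -> l <= n - 1 ->
  (k + 2 <= l) || (l + 2 <= k) -> T k :: T l :: T k :: T l :: b ~ Z :: b.
Proof.
move=> h1 h2 h3 h4 /orP[h|h].
  apply: farrel0; lia.
transitivity [:: T k, T l, T k, T l, T l, T k, T l, T k, Z & b].
  by rewrite (farrel0 l k) ?zz; [reflexivity|lia..].
rewrite (tt l) // (tt k) // (tt l) // (tt k) //; reflexivity.
Qed.

Lemma far k l b : 1 <= k -> k <= n - 1 -> 1 <= l -> l <= n - 1 ->
  (k + 2 <= l) || (l + 2 <= k) -> T k :: T l :: b ~ T l :: T k :: Z :: b.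
Proof.
move=> h1 h2 h3 h4 h.
transitivity [:: T k, T l, T k, T l, T l, T k & b].
  rewrite (tt l) // (tt k) //; reflexivity.
rewrite farrel // zt // zt //; reflexivity.
Qed.

Lemma braid0 j b : 1 <= j -> j <= n - 2 ->
  T j :: T j.+1 :: T j :: T j.+1 :: T j :: T j.+1 :: b ~ b.
Proof. move=> h1 h2. exact: (rel_b _ [::] b (rel_braid h1 h2)). Qed.

Lemma braid j b : 1 <= j -> j + 1 <= n - 1 ->
  T j :: T j.+1 :: T j :: b ~ T j.+1 :: T j :: T j.+1 :: b.
Proof.
move=> h1 h2.
transitivity [:: T j, T j.+1, T j, T j.+1, T j, T j.+1, T j.+1, T j, T j.+1 & b];
  last by rewrite braid0; [reflexivity|lia..].
rewrite (tt j.+1) ?(tt j) ?(tt j.+1); [reflexivity|lia..].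
Qed.

Definition okg (g : gen) := if g is T i then (0 < i) && (i <= n - 1) else true.

Lemma zX X b : all okg X -> Z :: X ++ b ~ X ++ Z :: b.
Proof.
elim: X => [|g X IH] /=; first by reflexivity.
case/andP=> hg hX. case: g hg => [_|i /andP[h1 h2]].
  by rewrite zz -IH // zz; reflexivity.
by rewrite zt // IH //; reflexivity.
Qed.

Lemma ok_brup d i : 1 <= i -> i + d + 1 <= n -> all okg (brup i d).
Proof.
elim: d i => [|d IH] i h1 h2 /=. rewrite andbT; apply/andP; lia.
rewrite /act_s /winv /= !all_cat /= IH; last (by lia); last by lia.
rewrite andbT /= andbT; apply/andP; lia.
Qed.

Lemma brupS i d b : brup i d.+1 ++ b = T i :: brup i.+1 d ++ T i :: Z :: b.
Proof. by rewrite /= /act_s /winv /= -catA /= -catA. Qed.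


Lemma lemA k d b : T k :: brup k.+1 d ++ T k :: b ~ brup k d.+1 ++ Z :: b.
Proof. rewrite brupS zz; reflexivity. Qed.

Lemma lemB i d b : 1 <= i -> i <= n - 1 ->
  T i :: brup i d.+1 ++ T i :: b ~ brup i.+1 d ++ Z :: b.
Proof. move=> h1 h2. rewrite brupS (tt i) // zt // (tt i) //; reflexivity. Qed.

Lemma lemB0 i b : 1 <= i -> i <= n - 1 -> T i :: T i :: T i :: b ~ T i :: Z :: Z :: b.
Proof. move=> h1 h2. rewrite (tt i) // zz; reflexivity. Qed.

Lemma farconj i k Y b : 1 <= i -> i <= n - 1 -> 1 <= k -> k <= n - 1 ->
  (k + 2 <= i) || (i + 2 <= k) -> all okg Y ->
  T k :: T i :: Y ++ T i :: Z :: T k :: b ~ T i :: T k :: Y ++ T k :: T i :: Z :: b.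
Proof.
move=> h1 h2 h3 h4 h hY.
rewrite (far k i) // zX // (zt i) // zz (far i k b) //; [reflexivity|lia].
Qed.

Lemma lemC d i b : 1 <= i -> i + d + 2 <= n ->
  T (i + d + 1) :: brup i d.+1 ++ T (i + d + 1) :: b ~ brup i d ++ Z :: b.
Proof.
elim: d i b => [|d IH] i b h1 h2.
  have -> : i + 0 + 1 = i.+1 by lia.
  rewrite brupS /= -(braid i) ?(tt i) ?zt ?(tt i.+1) /=; [reflexivity|lia..].
rewrite brupS farconj; [|lia..|]; last by apply: ok_brup; lia.
have -> : i + d.+1 + 1 = i.+1 + d + 1 by lia.
rewrite IH; [|lia..]. rewrite zt ?zz; [|lia..].
rewrite brupS zz; reflexivity.
Qed.

Lemma lemD d i b : 1 <= i -> i + d + 2 <= n ->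
  T (i + d + 1) :: brup i d ++ T (i + d + 1) :: b ~ brup i d.+1 ++ Z :: b.
Proof.
elim: d i b => [|d IH] i b h1 h2.
  have -> : i + 0 + 1 = i.+1 by lia.
  rewrite brupS /= zz -(braid i); [reflexivity|lia..].
rewrite (brupS i d) farconj; [|lia..|]; last by apply: ok_brup; lia.
have -> : i + d.+1 + 1 = i.+1 + d + 1 by lia.
rewrite IH; [|lia..]. rewrite zt ?zz; [|lia..].
rewrite (brupS i d.+1) zz; reflexivity.
Qed.


Lemma lemE m d i k b : d <= m -> 1 <= i -> i + d + 1 <= n -> 1 <= k -> k <= n - 1 ->
  [|| k + 2 <= i, i + d + 2 <= k | (i < k) && (k < i + d)] ->
  T k :: brup i d ++ T k :: b ~ brup i d ++ Z :: b.
Proof.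
elim: m d i k b => [|m IH] d i k b hd h1 h2 h3 h4 hc.
  have -> : d = 0 by lia.
  rewrite /= (far k i) ?zt ?(tt k); [reflexivity|lia..].
case: d hd h2 hc => [|d] hd h2 hc.
  rewrite /= (far k i) ?zt ?(tt k); [reflexivity|lia..].
case hf: ((k + 2 <= i) || (i + 2 <= k)).
  rewrite (brupS i d) farconj //; [|lia..|]; last by apply: ok_brup; lia.
  rewrite IH; [|lia..]. rewrite zt ?zz; [|lia..].
  rewrite (brupS i d) zz; reflexivity.
have hk : k = i.+1 by lia.
subst k.
case: d hd h2 hc hf => [|d] hd h2 hc hf; first by lia.
rewrite (brupS i d.+1) (brupS i.+1 d) -(braid i); [|lia..].
rewrite (zt i) ?zz; [|lia..].
rewrite -(braid i b); [|lia..].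
have -> : i.+1.+1 = i + 2 by lia.
rewrite (IH d (i + 2) i); [|lia..].
rewrite zt; [|lia..].
rewrite (brupS i d.+1) (brupS i.+1 d) zz.
have -> : i.+1.+1 = i + 2 by lia.
reflexivity.
Qed.


Lemma br_lt a b : a < b -> br a b = brup a (b - a - 1).
Proof. by rewrite /br => ->. Qed.

Lemma br_gt a b : b < a -> br a b = brup b (a - b - 1) ++ [:: Z].
Proof. move=> h. rewrite /br ifF //. apply/negbTE; rewrite -leqNgt; lia. Qed.

Lemma brsym a b : a != b -> br a b ~ br b a ++ [:: Z].
Proof.
move=> h. case: (ltngtP a b) => h'; last by move: h; rewrite h' eqxx.
- rewrite (br_lt a b h') (br_gt b a h') -catA /= zz cats0; reflexivity.
- rewrite (br_gt a b h') (br_lt b a h'); reflexivity.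
Qed.

Lemma s_val k i : s_ k i = if i == k then k.+1 else if i == k.+1 then k else i.
Proof. by []. Qed.

Lemma s1 k : s_ k k = k.+1.
Proof. by rewrite /s_ eqxx. Qed.
Lemma s2 k : s_ k k.+1 = k.
Proof. by rewrite /s_ eqxx ifF //; apply/negbTE; lia. Qed.
Lemma s3 k i : i != k -> i != k.+1 -> s_ k i = i.
Proof. by rewrite /s_ => /negbTE -> /negbTE ->. Qed.

Lemma main_lt i j k : i < j -> 1 <= i -> j <= n -> 1 <= k -> k <= n - 1 ->
  T k :: brup i (j - i - 1) ++ [:: T k] ~ br (s_ k i) (s_ k j) ++ [:: Z].
Proof.
move=> hij h1 h2 h3 h4.
have [e|ne1] := eqVneq k.+1 i.
  subst i. rewrite s2 (@s3 k j); [|lia..].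
  rewrite br_lt; last by lia.
  have -> : j - k - 1 = (j - k.+1 - 1).+1 by lia.
  exact: lemA.
have [e|ne2] := eqVneq i k.
  subst i. rewrite s1.
  have [e|ne3] := eqVneq j k.+1.
    subst j. rewrite s2.
    rewrite br_gt //. have -> : k.+1 - k - 1 = 0 by lia. rewrite /= . rewrite lemB0; [reflexivity|lia..].
  rewrite (@s3 k j); [|lia..].
  rewrite br_lt; last by lia.
  have -> : j - k - 1 = (j - k.+1 - 1).+1 by lia.
  exact: lemB.
rewrite (@s3 k i); [|lia..].
have [e|ne3] := eqVneq j k.+1.
  subst j. rewrite s2.
  rewrite br_lt; last by lia.
  have := lemC (k - i - 1) i [::]. have -> : i + (k - i - 1) + 1 = k by lia.
  have -> : (k - i - 1).+1 = k.+1 - i - 1 by lia. apply; lia.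
have [e|ne4] := eqVneq j k.
  subst j. rewrite s1.
  rewrite br_lt; last by lia.
  have := lemD (k - i - 1) i [::]. have -> : i + (k - i - 1) + 1 = k by lia.
  have -> : (k - i - 1).+1 = k.+1 - i - 1 by lia. apply; lia.
rewrite (@s3 k j); [|lia..].
rewrite br_lt //. apply: (lemE (j - i - 1)); lia.
Qed.

End S.

Lemma s_inj k i j : i != j -> s_ k i != s_ k j.
Proof. rewrite /s_ => h; apply/negP => /eqP; do ! case: eqP; lia. Qed.

Theorem lemma3p4 (n : nat) (hn : 4 <= n) (i j k : nat)
  (hi : 1 <= i <= n) (hj : 1 <= j <= n) (hij : i != j)
  (hk : 1 <= k <= n - 1) :
  Tn_eq n (act_s k (br i j)) (br (s_ k i) (s_ k j) ++ [:: Z]).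
Proof.
case/andP: hi => hi1 hi2; case/andP: hj => hj1 hj2; case/andP: hk => hk1 hk2.
case: (ltngtP i j) => h; last by move: hij; rewrite h eqxx.
- rewrite /act_s /winv br_lt //=. exact: main_lt.
- rewrite /act_s /winv br_gt //=.
  transitivity (T k :: brup j (i - j - 1) ++ [:: T k] ++ [:: Z]).
    rewrite -catA /= zt; [reflexivity|lia..].
  rewrite catA -cat_cons (main_lt n j i k) //; try lia.
  rewrite (brsym n _ _ (s_inj k i j hij)) -catA /=; reflexivity.
Qed.
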